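(* Let $n\ge 1$ and let $\sigma_{ABB'}$ be an arbitrary quantum state where $A$ consists of $2n$ qubits and $B,B'$ are arbitrary finite-dimensional systems. Let $\Phi_B$ be an arbitrary quantum operation acting on $B$ only that outputs a classical string $T\in\{0,1\}^{2n}$, and let $\Phi_{B'}$ be an arbitrary quantum operation acting on $B'$ only that outputs a classical string $T'\in\{0,1\}^{2n}$. Let $\mathcal{Z}\subset[2n]$ be a uniformly random subset of size $n$, chosen independently of everything else, and $\mathcal{X}=[2n]\setminus\mathcal{Z}$. The qubits of $A$ indexed by $\mathcal{Z}$ are measured in the computational basis $\{\ket0,\ket1\}$, giving $S_{\mathcal{Z}}\in\{0,1\}^n$, and those indexed by $\mathcal{X}$ are measured in the Hadamard basis $\{\ket+,\ket-\}$, giving $S_{\mathcal{X}}\in\{0,1\}^n$. Write $T_{\mathcal{Z}}$ for the restriction of $T$ to $\mathcal{Z}$ and $T'_{\mathcal{X}}$ for the restriction of $T'$ to $\mathcal{X}$. Let $$\alpha := \Pr\left[T_{\mathcal{Z}} = S_{\mathcal{Z}} \ \wedge\ T'_{\mathcal{X}} = S_{\mathcal{X}}\right].$$ Then $$\alpha \le \inf_{\delta\in(0,\frac12)}\left( 2^{1-n(1-h(\delta))} + 2\exp\!\left(-\tfrac12 n\delta^2\right)\right),$$ where $h(q)=-q\log q-(1-q)\log(1-q)$ is the binary entropy (logarithm base 2).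
   Context: Interpretation: $\alpha$ is the probability that, in a bit commitment protocol where Alice holds halves of EPR pairs, a dishonest agent Bob successfully opens $0$ (matching Alice's computational-basis outcomes) while a non-communicating agent Brian successfully opens $1$ (matching Alice's Hadamard-basis outcomes). *)

(* Defs.v *)
From HB Require Import structures.
From mathcomp Require Import all_boot all_order all_algebra.
From mathcomp Require Import complex.
From mathcomp Require Import reals.
From mathcomp.analysis Require Import sequences exp.

Set Implicit Arguments.
Unset Strict Implicit.
Unset Printing Implicit Defensive.

Import Order.TTheory GRing.Theory Num.Theory.
Local Open Scope ring_scope.

(** Operators on the finite-dimensional Hilbert space C^K, with K a finite
    type indexing an orthonormal basis, are represented by their matrix
    entries [X x y] (x = row, y = column). *)
Definition op (R : realType) (K : finType) := K -> K -> R[i].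

(** Positive semidefinite: <v, X v> >= 0 for every vector v
    (in the order of C, this also says the quadratic form is real). *)
Definition psd (R : realType) (K : finType) (X : op R K) : Prop :=
  forall v : K -> R[i],
    0 <= \sum_(x : K) \sum_(y : K) (v x)^* * X x y * v y.

Definition density (R : realType) (K : finType) (rho : op R K) : Prop :=
  psd rho /\ \sum_(x : K) rho x x = 1.

Definition povm (R : realType) (K O : finType) (M : O -> op R K) : Prop :=
  (forall o, psd (M o)) /\
  (forall x y : K, \sum_(o : O) M o x y = (x == y)%:R).

(** Bit strings of length m: basis labels of m qubits / classical strings. *)
Definition bits (m : nat) := {ffun 'I_m -> bool}.

(** Single-qubit rank-one projector onto the outcome-[s] vector of the
    computational basis ([hadamard = false]: |0>,|1>) or of the Hadamard
    basis ([hadamard = true]: |+> for s = false, |-> for s = true). *)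
Definition qubit_proj (R : realType) (hadamard s : bool) (a b : bool) : R[i] :=
  if hadamard then
    (1 / 2) * (-1) ^+ (s && a) * (-1) ^+ (s && b)
  else ((a == s) && (b == s))%:R.

(** The projector on the 2n qubits of A when the qubits in Z are measured in
    the computational basis, the others in the Hadamard basis, and the
    (combined) outcome string is s. *)
Definition meas_proj (R : realType) (m : nat) (Z : {set 'I_m}) (s : bits m)
  : op R (bits m) :=
  fun a b => \prod_(i < m) qubit_proj R (i \notin Z) (s i) (a i) (b i).

Definition tens3 (R : realType) (KA KB KB' : finType)
  (X : op R KA) (Y : op R KB) (W : op R KB') : op R (KA * KB * KB')%type :=
  fun x y => X x.1.1 y.1.1 * Y x.1.2 y.1.2 * W x.2 y.2.

Definition trace_mul (R : realType) (K : finType) (rho X : op R K) : R[i] :=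
  \sum_(x : K) \sum_(y : K) rho x y * X y x.

(** The success probability alpha: Z uniform among the n-subsets of [2n]
    (X its complement), the qubits of A measured as described giving S,
    Bob's measurement M on B giving T, Brian's measurement N on B' giving T',
    and the event  T_Z = S_Z  /\  T'_X = S_X. *)
Definition alpha (R : realType) (n : nat) (B B' : finType)
  (sigma : op R (bits (2 * n) * B * B')%type)
  (M : bits (2 * n) -> op R B) (N : bits (2 * n) -> op R B') : R :=
  (('C(2 * n, n))%:R)^-1 *
  \sum_(Z : {set 'I_(2 * n)} | #|Z| == n)
    \sum_(s : bits (2 * n)) \sum_(t : bits (2 * n)) \sum_(t' : bits (2 * n))
      if [forall i, (i \in Z) ==> (t i == s i)] &&
         [forall i, (i \notin Z) ==> (t' i == s i)]
      then complex.Re (trace_mul sigma (tens3 (meas_proj R Z s) (M t) (N t')))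
      else 0.

Definition log2 (R : realType) (x : R) : R := ln x / ln 2.
Definition h2 (R : realType) (q : R) : R :=
  - q * log2 q - (1 - q) * log2 (1 - q).

(* Main.v *)
Require Import Defs.
From HB Require Import structures.
From mathcomp Require Import all_boot all_order all_algebra.
From mathcomp Require Import complex.
From mathcomp Require Import reals.
From mathcomp.analysis Require Import sequences exp.
From mathcomp Require Import spectral sesquilinear.
From mathcomp Require Import ring lra zify.
Import Order.TTheory GRing.Theory Num.Theory.
Local Open Scope ring_scope.

Section Schur.
Variable R : realType.

Lemma schur (I K : finType) (P : pred I) (F : I -> K -> R) (w mu : R) :
  0 < w -> 0 < mu ->
  (forall i, P i -> w * \sum_(j | P j) `|\sum_a F i a * F j a| <= mu) ->
  forall x : K -> R,
  \sum_(i | P i) w * (\sum_a F i a * x a) ^+ 2 <= mu * \sum_a x a ^+ 2.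
Proof.
move=> w0 mu0 H x.
have [c hc] : exists c : I -> R, forall i, c i = \sum_a F i a * x a
  by exists (fun i => \sum_a F i a * x a).
set S := \sum_(i | P i) w * c i ^+ 2.
have [W hW] : exists W : K -> R, forall a, W a = \sum_(i | P i) w * c i * F i a
  by exists (fun a => \sum_(i | P i) w * c i * F i a).
have F1 : \sum_a x a * W a = S.
  rewrite /S.
  under eq_bigr do rewrite hW mulr_sumr.
  rewrite exchange_big /=; apply: eq_bigr => i _.
  transitivity (w * c i * \sum_a F i a * x a); last by rewrite expr2 mulrA -hc.
  rewrite mulr_sumr; apply: eq_bigr => a _; ring.
have F2 : \sum_a W a ^+ 2 =
    \sum_(i | P i) \sum_(j | P j) w * w * c i * c j * \sum_a F i a * F j a.
  under eq_bigr do rewrite hW expr2 mulr_suml.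
  rewrite exchange_big /=; apply: eq_bigr => i0 Pi.
  under eq_bigr do rewrite mulr_sumr.
  rewrite exchange_big /=; apply: eq_bigr => j Pj.
  rewrite mulr_sumr; apply: eq_bigr => a _; ring.
have F3 : \sum_a W a ^+ 2 <= mu * S.
  rewrite F2.
  apply: (@le_trans _ _ (\sum_(i | P i) \sum_(j | P j)
        w * w * c i ^+ 2 * `|\sum_a F i a * F j a|)).
    have -> : \sum_(i | P i) \sum_(j | P j) w * w * c i ^+ 2 * `|\sum_a F i a * F j a|
      = \sum_(i | P i) \sum_(j | P j) w * w * ((c i ^+ 2 + c j ^+ 2) / 2) * `|\sum_a F i a * F j a|.
      under [RHS]eq_bigr do (under eq_bigr do rewrite mulrDl mulrDr mulrDl).
      under [RHS]eq_bigr do rewrite big_split /=.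
      rewrite big_split /=.
      rewrite [X in _ = _ + X]exchange_big /=.
      rewrite -big_split /=; apply: eq_bigr => i0 Pi.
      rewrite -big_split /=; apply: eq_bigr => j Pj.
      have -> : \sum_a F j a * F i0 a = \sum_a F i0 a * F j a.
        by apply: eq_bigr => a _; rewrite mulrC.
      by rewrite -mulrDl -mulrDr -splitr.
    apply: ler_sum => i Pi; apply: ler_sum => j Pj.
    set g := \sum_a F i a * F j a.
    have hg : 0 <= `|g| by [].
    have hw : 0 <= w * w by rewrite mulr_ge0 // ltW.
    have -> : w * w * c i * c j * g = w * w * (c i * c j * g) by ring.
    rewrite -[X in _ <= X]mulrA; apply: ler_wpM2l => //.
    apply: (le_trans (ler_norm _)).
    rewrite !normrM.
    have h2 : `|c i| * `|c j| <= (c i ^+ 2 + c j ^+ 2) / 2.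
      rewrite -(real_normK (num_real (c i))) -(real_normK (num_real (c j))).
      have := sqr_ge0 (`|c i| - `|c j|); lra.
    by rewrite ler_wpM2r.
  rewrite /S mulr_sumr; apply: ler_sum => i Pi.
  have -> : \sum_(j | P j) w * w * c i ^+ 2 * `|\sum_a F i a * F j a| =
     (w * \sum_(j | P j) `|\sum_a F i a * F j a|) * (w * c i ^+ 2).
    by rewrite mulr_sumr mulr_suml; apply: eq_bigr => j _; ring.
  have hci : 0 <= w * c i ^+ 2 by rewrite mulr_ge0 ?sqr_ge0 // ltW.
  by rewrite ler_wpM2r // H.
have F4 : 0 <= \sum_a (W a - mu * x a) ^+ 2 by apply: sumr_ge0 => a _; exact: sqr_ge0.
have E : \sum_a (W a - mu * x a) ^+ 2 =
   \sum_a W a ^+ 2 - 2 * mu * \sum_a x a * W a + mu ^+ 2 * \sum_a x a ^+ 2.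
  rewrite !mulr_sumr -sumrB -big_split /=; apply: eq_bigr => a _; ring.
rewrite E F1 in F4.
move: F3 F4; set X2 := \sum_a x a ^+ 2; set W2 := \sum_a W a ^+ 2 => F3 F4.
have : mu * S <= mu * (mu * X2).
  rewrite -subr_ge0; have -> : mu * (mu * X2) - mu * S =
     (W2 - 2 * mu * S + mu ^+ 2 * X2) + (mu * S - W2) by ring.
  by apply: addr_ge0 => //; rewrite subr_ge0.
have -> : \sum_(i | P i) w * (\sum_a F i a * x a) ^+ 2 = S by apply: eq_bigr => i _; rewrite hc.
by move=> h; rewrite -(ler_pM2l mu0).
Qed.
End Schur.

Section Num.
Variable R : realType.

Lemma binrec (n : nat) :
  (n.+1 * 'C((n.+1).*2, n.+1) = 2 * (n.*2).+1 * 'C(n.*2, n))%N.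
Proof.
have e1 : 'C((n.+1).*2, n.+1) = ('C((n.*2).+1, n.+1) + 'C((n.*2).+1, n))%N.
  by rewrite doubleS binS.
have e2 : 'C((n.*2).+1, n) = 'C((n.*2).+1, n.+1).
  rewrite -(@bin_sub (n.*2).+1 n.+1); last by lia.
  congr 'C(_, _); lia.
have e3 := mul_bin_diag (n.*2).+1 n.
rewrite /= in e3.
rewrite e1 e2 mulnDr -e3; lia.
Qed.

Definition cb (k : nat) : R := ('C(k.*2, k))%:R.

Lemma cb_bound (n : nat) : (1 <= n)%N ->
  5 * 16 ^+ n <= (16 * n%:R + 4) * cb n ^+ 2.
Proof.
elim: n => // n IH _.
case: n IH => [|n] IH.
  have -> : (cb 1) = 2 by rewrite /cb. 
  by rewrite expr1; lra.
have {}IH := IH isT.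
set m := n.+1 in IH *.
have hr : (m.+1)%:R * cb m.+1 = 2 * (2 * m%:R + 1) * cb m.
  have h : ((m.+1 * 'C(m.+1.*2, m.+1))%N%:R : R) = (2 * (m.*2).+1 * 'C(m.*2, m))%N%:R by rewrite binrec.
  have e : ((m.*2).+1%:R : R) = 2 * m%:R + 1 by rewrite -natr1 -mul2n natrM.
  rewrite !natrM e in h. rewrite /cb h; ring.
set x := m%:R in hr IH *.
set y := cb m in hr IH *. set z := cb m.+1 in hr *.
set P : R := 16 ^+ m in IH *.
rewrite exprS -/P -natr1 -/x.
have hx : 0 <= x by rewrite /x ler0n.
have hxy : (x + 1) ^+ 2 * ((16 * (x + 1) + 4) * z ^+ 2) =
   (16 * x + 20) * (4 * (2 * x + 1) ^+ 2 * y ^+ 2).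
  rewrite -natr1 -/x in hr.
  have -> : (x + 1) ^+ 2 * ((16 * (x + 1) + 4) * z ^+ 2) =
     (16 * (x + 1) + 4) * ((x + 1) * z) ^+ 2 by ring.
  rewrite hr; ring.
have hy : 0 <= y ^+ 2 by exact: sqr_ge0.
have h1 : (x + 1) ^+ 2 * (16 * (5 * P)) <= (x + 1) ^+ 2 * ((16 * (x + 1) + 4) * z ^+ 2).
  rewrite hxy.
  have : 16 * (5 * P) <= 16 * ((16 * x + 4) * y ^+ 2) by lra.
  move=> h2; nra.
rewrite ler_pM2l in h1; first by lra.
nra.
Qed.

Lemma pow_bound (n : nat) : 4 * n%:R + 1 <= 5 * (36 / 25 : R) ^+ n.
Proof.
case: n => [|n]; first by rewrite expr0; lra.
case: n => [|n]; first by rewrite expr1; lra.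
case: n => [|n]; first by rewrite expr2; lra.
elim: n => [|n IH]; first by rewrite !exprS expr0; lra.
rewrite exprS. set Q := (36 / 25 : R) ^+ n.+3 in IH *.
have hn : (n.+4%:R : R) = n.+3%:R + 1 by rewrite -natr1.
rewrite hn.
set y := (n.+3)%:R in IH *.
have hy : 3 <= y by rewrite /y ler_nat.
have h : (36 / 25 : R) * (4 * y + 1) <= 36 / 25 * (5 * Q) by apply: ler_wpM2l IH; lra.
lra.
Qed.

Lemma final_num (n : nat) (delta : R) : (1 <= n)%N -> 0 < delta < 1 / 2 ->
  (('C(2 * n, n))%:R)^-1 * (35 / 12 : R) ^+ n <=
  powR 2 (1 - n%:R * (1 - h2 delta)) + 2 * expR (- (1 / 2) * n%:R * delta ^+ 2).
Proof.
move=> n1 /andP[d0 d1].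
have eC : (('C(2 * n, n))%:R : R) = cb n by rewrite /cb mul2n.
rewrite eC.
have Cb := @cb_bound n n1.
have Pb := pow_bound n.
set C := cb n in Cb *.
have C0 : 0 < C by rewrite /C /cb ltr0n bin_gt0 -addnn leq_addl.
set K := (35 / 12 : R) ^+ n.
have K0 : 0 <= K by rewrite /K exprn_ge0 //; lra.
set E := (7 / 8 : R) ^+ n.
have E0 : 0 <= E by rewrite /E exprn_ge0 //; lra.
have step1 : K <= 2 * E * C.
  rewrite -(@ler_pXn2r _ 2) ?nnegrE //; last first.
    by rewrite mulr_ge0 ?mulr_ge0 //; lra.
  have eK : K ^+ 2 = (1225 / 144 : R) ^+ n.
    by rewrite /K -exprM mulnC exprM; congr (_ ^+ _); lra.
  have eE : (2 * E * C) ^+ 2 = 4 * (49 / 64 : R) ^+ n * C ^+ 2.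
    have -> : (2 * E * C) ^+ 2 = 2 ^+ 2 * (E ^+ 2) * C ^+ 2 by ring.
    rewrite /E -exprM mulnC exprM.
    have -> : (7 / 8 : R) ^+ 2 = 49 / 64 by rewrite expr2; lra.
    ring.
  have e1 : (36 / 25 : R) ^+ n * (1225 / 144) ^+ n = (49 / 4) ^+ n.
    by rewrite -exprMn; congr (_ ^+ _); lra.
  have e2 : (49 / 64 : R) ^+ n * 16 ^+ n = (49 / 4) ^+ n.
    by rewrite -exprMn; congr (_ ^+ _); lra.
  rewrite eK eE.
  have hn : 0 <= n%:R :> R by rewrite ler0n.
  set A := (1225 / 144 : R) ^+ n in e1 *.
  set B := (36 / 25 : R) ^+ n in Pb e1.
  set Dd := (49 / 64 : R) ^+ n in e2 *.
  set G := (16 : R) ^+ n in e2 Cb.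
  set H := (49 / 4 : R) ^+ n in e1 e2.
  have A0 : 0 <= A by rewrite /A exprn_ge0 //; lra.
  have D0 : 0 <= Dd by rewrite /Dd exprn_ge0 //; lra.
  have h1 : (4 * n%:R + 1) * A <= 5 * B * A by rewrite ler_wpM2r.
  have h2 : 4 * Dd * (5 * G) <= 4 * Dd * ((16 * n%:R + 4) * C ^+ 2).
    by rewrite ler_wpM2l // mulr_ge0 //; lra.
  have : (16 * n%:R + 4) * A <= (16 * n%:R + 4) * (4 * Dd * C ^+ 2).
    have -> : (16 * n%:R + 4) * A = 4 * ((4 * n%:R + 1) * A) by ring.
    have -> : (16 * n%:R + 4) * (4 * Dd * C ^+ 2) = 4 * Dd * ((16 * n%:R + 4) * C ^+ 2) by ring.
    apply: le_trans h2.
    have -> : 4 * Dd * (5 * G) = 20 * (Dd * G) by ring.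
    rewrite e2 -e1; lra.
  rewrite ler_pM2l //; lra.
have step2 : E <= expR (- (1 / 2) * n%:R * delta ^+ 2).
  apply: (@le_trans _ _ (expR (n%:R * (- (1 / 8))))).
    rewrite expRM_natl /E; apply: lerXn2r; rewrite ?nnegrE ?expR_ge0 //; first lra.
    have := expR_ge1Dx (- (1 / 8) : R); lra.
  rewrite ler_expR.
  have hn : 0 <= n%:R :> R by rewrite ler0n.
  have : delta ^+ 2 <= 1 / 4 by rewrite expr2; nra.
  nra.
have hp := powR_ge0 2 (1 - n%:R * (1 - h2 delta)).
have : C^-1 * K <= 2 * E.
  by rewrite ler_pdivrMl // mulrC.
lra.
Qed.
End Num.

Set Implicit Arguments. Unset Strict Implicit.
Section Dec.
Variable C : numClosedFieldType.

Definition psdC (K : finType) (X : K -> K -> C) :=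
  forall v : K -> C, 0 <= \sum_x \sum_y (v x)^* * X x y * v y.

Lemma psd_ext (K : finType) (X Y : K -> K -> C) :
  psdC X -> (forall x y, X x y = Y x y) -> psdC Y.
Proof.
move=> H e v; have := H v.
by under eq_bigr do under eq_bigr do rewrite e.
Qed.

Lemma sum_delta_r (K : finType) (f : K -> C) x :
  \sum_y f y * (y == x)%:R = f x.
Proof.
rewrite (bigD1 x) //= eqxx mulr1 big1 ?addr0 // => y /negbTE ->; exact: mulr0.
Qed.

Lemma sum_delta_l (K : finType) (f : K -> C) x :
  \sum_y (y == x)%:R * f y = f x.
Proof. by under eq_bigr do rewrite mulrC; exact: sum_delta_r. Qed.

Lemma sum_delta2_r (K : finType) (g : K -> C) x y c :
  \sum_b g b * ((b == x)%:R + c * (b == y)%:R) = g x + c * g y.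
Proof.
under eq_bigr do rewrite mulrDr mulrCA.
by rewrite big_split /= -mulr_sumr !sum_delta_r.
Qed.

Lemma sum_delta2_l (K : finType) (g : K -> C) x y c :
  \sum_b ((b == x)%:R + c * (b == y)%:R) * g b = g x + c * g y.
Proof.
under eq_bigr do rewrite mulrC.
by rewrite sum_delta2_r.
Qed.

Lemma qf_pair (K : finType) (X : K -> K -> C) x y c :
  \sum_a \sum_b (((a == x)%:R + c * (a == y)%:R))^* * X a b *
      ((b == x)%:R + c * (b == y)%:R)
  = X x x + c * X x y + c^* * X y x + c^* * c * X y y.
Proof.
under eq_bigr => a _.
  rewrite (@sum_delta2_r _ (fun b => (((a == x)%:R + c * (a == y)%:R))^* * X a b)).
  rewrite rmorphD rmorphM /= !rmorph_nat.
  over.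
rewrite big_split /= -mulr_sumr.
rewrite (@sum_delta2_l _ (fun a => X a x)) (@sum_delta2_l _ (fun a => X a y)); ring.
Qed.

Lemma psd_herm (K : finType) (X : K -> K -> C) : psdC X ->
  forall x y, X y x = (X x y)^*.
Proof.
move=> H x y.
have q (c : C) : X x x + c * X x y + c^* * X y x + c^* * c * X y y \is Num.real.
  by rewrite -qf_pair; apply: ger0_real; exact: H.
have rx : X x x \is Num.real.
  by have := q 0; rewrite rmorph0 !mul0r !addr0.
have ry : X y y \is Num.real.
  have := H (fun a => (a == y)%:R + 0 * (a == y)%:R).
  by rewrite qf_pair rmorph0 !mul0r !addr0 => /ger0_real.
have e1 := conj_Creal (q 1).
have e2 := conj_Creal (q 'i).
rewrite rmorph1 !mul1r !rmorphD /= (conj_Creal rx) (conj_Creal ry) in e1.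
rewrite conjCi !rmorphD !rmorphM /= !rmorphN /= !conjCi ?opprK (conj_Creal rx) (conj_Creal ry) in e2.
set a := X x y in e1 e2 *; set b := X y x in e1 e2 *.
move/eqP: e1; rewrite -subr_eq0 => /eqP e1.
move/eqP: e2; rewrite -subr_eq0 => /eqP e2.
have E1 : (a^* + b^*) - (a + b) = 0 by rewrite -e1; ring.
have E2 : 'i * ((b^* - a^*) - (a - b)) = 0.
  by rewrite -e2; ring.
move/eqP: E2; rewrite mulf_eq0 (negbTE (neq0Ci C)) /= => /eqP E2.
have h2 : (2 : C) != 0 by rewrite pnatr_eq0.
have : 2 * b^* = 2 * a.
  apply/eqP; rewrite -subr_eq0; apply/eqP.
  by rewrite -[RHS](addr0 0) -{1}E1 -{1}E2; ring.
move/(mulfI h2) => <-; by rewrite conjCK.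
Qed.

Local Open Scope sesquilinear_scope.

Lemma sum_enum (K : finType) (f : 'I_#|K| -> C) :
  \sum_(x : K) f (enum_rank x) = \sum_(i : 'I_#|K|) f i.
Proof.
rewrite (reindex (@enum_val K (mem predT))) /=.
  2: by apply: onW_bij; exact: enum_val_bij.
by apply: eq_bigr => i _; rewrite enum_valK.
Qed.

Lemma qf_dec (K J : finType) (d : J -> C) (u : J -> K -> C) (v : K -> C) :
  \sum_x \sum_y (v x)^* * (\sum_j d j * u j x * (u j y)^*) * v y =
  \sum_j d j * (\sum_x (v x)^* * u j x) * (\sum_y (u j y)^* * v y).
Proof.
under eq_bigr => x _ do under eq_bigr => y _ do rewrite mulr_sumr mulr_suml.
under eq_bigr => x _ do rewrite exchange_big /=.
rewrite exchange_big /=; apply: eq_bigr => j _.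
rewrite -mulrA mulr_suml mulr_sumr; apply: eq_bigr => x _.
rewrite !mulr_sumr; apply: eq_bigr => y _; ring.
Qed.

Lemma psd_dec (K : finType) (X : K -> K -> C) : psdC X ->
  exists (d : 'I_#|K| -> C) (u : 'I_#|K| -> K -> C),
    (forall j, 0 <= d j) /\ (forall x y, X x y = \sum_j d j * u j x * (u j y)^*).
Proof.
move=> H.
pose Xm : 'M[C]_#|K| := \matrix_(i, j) X (enum_val i) (enum_val j).
have herm : Xm ^t* = Xm.
  by apply/matrixP => i j; rewrite !mxE (psd_herm H) conjCK.
have nm : Xm \is normalmx by apply/normalmxP; rewrite herm.
have E := orthomx_spectralP nm.
set P := spectralmx Xm in E; set d := spectral_diag Xm in E.
have PU : P \is unitarymx by exact: spectral_unitarymx.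
rewrite invmx_unitary // in E.
have Xe : forall x y, X x y =
    \sum_k d 0 k * (P k (enum_rank x))^* * ((P k (enum_rank y))^*)^*.
  move=> x y.
  have -> : X x y = Xm (enum_rank x) (enum_rank y) by rewrite mxE !enum_rankK.
  rewrite E mul_mx_diag !mxE; apply: eq_bigr => k _; rewrite !mxE conjCK; ring.
exists (fun k => d 0 k), (fun k x => (P k (enum_rank x))^*).
split; last exact: Xe.
move=> k.
have orth : forall j l, \sum_(x : K) P j (enum_rank x) * (P l (enum_rank x))^* = (j == l)%:R.
  move=> j l.
  rewrite (@sum_enum K (fun i => P j i * (P l i)^*)).
  move/unitarymxP: PU => /matrixP /(_ j l); rewrite !mxE => <-.
  by apply: eq_bigr => i _; rewrite !mxE.
have := H (fun x => (P k (enum_rank x))^*).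
under eq_bigr => x _ do under eq_bigr => y _ do rewrite Xe.
rewrite qf_dec.
under eq_bigr => j _.
  under eq_bigr => x _ do rewrite conjCK.
  under [X in _ * X]eq_bigr => y _ do rewrite conjCK.
  rewrite !orth.
  over.
rewrite (bigD1 k) //= eqxx big1 ?addr0 ?mulr1 //.
by move=> j /negbTE; rewrite eq_sym => ->; rewrite !mulr0.
Qed.

Lemma psd_of_dec (K J : finType) (Z : K -> K -> C) (D : J -> C) (U : J -> K -> C) :
  (forall x y, Z x y = \sum_p D p * U p x * (U p y)^*) -> (forall p, 0 <= D p) ->
  psdC Z.
Proof.
move=> ZE D0 v.
under eq_bigr => x _ do under eq_bigr => y _ do rewrite ZE.
rewrite qf_dec; apply: sumr_ge0 => p _.
have -> : \sum_y (U p y)^* * v y = (\sum_x (v x)^* * U p x)^*.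
  rewrite rmorph_sum /=; apply: eq_bigr => y _; rewrite rmorphM /= conjCK mulrC //.
by rewrite -mulrA mulr_ge0 // mul_conjC_ge0.
Qed.

Definition tens2 (K1 K2 : finType) (X : K1 -> K1 -> C) (Y : K2 -> K2 -> C)
  : (K1 * K2)%type -> (K1 * K2)%type -> C := fun x y => X x.1 y.1 * Y x.2 y.2.

Lemma psd_tens (K1 K2 : finType) (X : K1 -> K1 -> C) (Y : K2 -> K2 -> C) :
  psdC X -> psdC Y -> psdC (tens2 X Y).
Proof.
move=> /psd_dec [d [u [d0 Xe]]] /psd_dec [e [w [e0 Ye]]].
apply: (@psd_of_dec _ _ _ (fun p => d p.1 * e p.2) (fun p x => u p.1 x.1 * w p.2 x.2)).
  move=> x y; rewrite /tens2 Xe Ye mulr_suml.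
  under eq_bigr do rewrite mulr_sumr.
  rewrite pair_bigA /=; apply: eq_bigr => p _; rewrite rmorphM /=; ring.
by move=> p; rewrite mulr_ge0.
Qed.

Lemma tr_ge0 (K : finType) (X Y : K -> K -> C) : psdC X -> psdC Y ->
  0 <= \sum_x \sum_y X x y * Y y x.
Proof.
move=> HX /psd_dec [e [w [e0 Ye]]].
under eq_bigr => x _ do under eq_bigr => y _ do rewrite Ye mulr_sumr.
under eq_bigr => x _ do rewrite exchange_big /=.
rewrite exchange_big /=; apply: sumr_ge0 => j _.
have := HX (w j).
move=> h; have := mulr_ge0 (e0 j) h; rewrite mulr_sumr => h2.
apply: le_trans h2 _; rewrite le_eqVlt; apply/orP; left; apply/eqP.
apply: eq_bigr => x _; rewrite mulr_sumr; apply: eq_bigr => y _; ring.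
Qed.
End Dec.

Section Quant.
Variable R : realType.
Local Notation C := (R[i]).
Local Notation "x %:C" := (real_complex R x) : ring_scope.

Lemma real_C (x : R) : (x%:C : C) \is Num.real.
Proof. by apply/complex_realP; exists x. Qed.

Lemma lift (K : finType) (r : K -> K -> R) :
  (forall a b, r a b = r b a) ->
  (forall x : K -> R, 0 <= \sum_a \sum_b r a b * (x a * x b)) ->
  psdC (fun a b => ((r a b)%:C : C)).
Proof.
move=> rs rp v.
pose p a := complex.Re (v a); pose q a := complex.Im (v a).
have vE : forall a, v a = (p a)%:C + 'i * (q a)%:C.
  by move=> a; rewrite {1}[v a]complexE complexiE.
have cE : forall a, (v a)^* = (p a)%:C - 'i * (q a)%:C.
  by move=> a; rewrite vE conjC_rect // real_C.
have hi : 'i * 'i + 1 = 0 :> C by rewrite -expr2 sqrCi addNr.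
have E : forall a b, (v a)^* * (r a b)%:C * v b =
   (r a b * (p a * p b + q a * q b))%:C + 'i * (r a b * (p a * q b - q a * p b))%:C.
  move=> a b; rewrite cE vE !(rmorphM, rmorphD, rmorphB, rmorphN) /=.
  transitivity ((r a b)%:C * ((p a)%:C * (p b)%:C + (q a)%:C * (q b)%:C) +
     'i * ((r a b)%:C * ((p a)%:C * (q b)%:C - (q a)%:C * (p b)%:C))
     - ('i * 'i + 1) * ((q a)%:C * (r a b)%:C * (q b)%:C)); first by ring.
  by rewrite hi mul0r subr0.
under eq_bigr => a _ do under eq_bigr => b _ do rewrite E.
under eq_bigr => a _ do rewrite big_split /= -mulr_sumr -!rmorph_sum.
rewrite big_split /= -mulr_sumr -!rmorph_sum /=.
have Z0 : \sum_a \sum_b r a b * (p a * q b - q a * p b) = 0.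
  under eq_bigr => a _ do under eq_bigr => b _ do rewrite mulrBr.
  under eq_bigr => a _ do rewrite sumrB.
  rewrite sumrB [X in _ - X]exchange_big /=; apply/eqP; rewrite subr_eq0; apply/eqP.
  apply: eq_bigr => a _; apply: eq_bigr => b _; rewrite rs; ring.
rewrite Z0 mulr0 addr0 ler0c.
under eq_bigr => a _ do under eq_bigr => b _ do rewrite mulrDr.
under eq_bigr => a _ do rewrite big_split /=.
by rewrite big_split /= addr_ge0.
Qed.

Definition fq (h s a : bool) : R := if h then (-1) ^+ (s && a) else (a == s)%:R.
Definition Fm (m : nat) (Z : {set 'I_m}) (s a : bits m) : R :=
  \prod_(i < m) fq (i \notin Z) (s i) (a i).

Lemma qubit_projE h s a b :
  qubit_proj R h s a b = ((if h then 1 / 2 else 1) * fq h s a * fq h s b)%:C.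
Proof.
rewrite /qubit_proj /fq.
case: h; rewrite !(rmorphM, fmorphV, rmorph_nat, rmorphN, rmorph1, rmorph0, rmorphXn) //=.
by rewrite mul1r -natrM mulnb.
Qed.

Lemma meas_projE (n : nat) (Z : {set 'I_(2 * n)}) s a b : #|Z| = n ->
  meas_proj R Z s a b = ((1 / 2) ^+ n * Fm Z s a * Fm Z s b)%:C.
Proof.
move=> hZ; rewrite /meas_proj.
under eq_bigr do rewrite qubit_projE.
rewrite -rmorph_prod; congr (_%:C).
rewrite !big_split /=; congr (_ * _ * _).
rewrite -big_mkcond /= prodr_const.
congr (_ ^+ _).
have := cardC (mem Z); rewrite card_ord hZ.
move=> h. have e : #|(fun i : 'I_(2 * n) => i \notin Z)| = #|[predC mem Z]| by apply: eq_card => i; rewrite !inE.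
by rewrite e; apply/eqP; rewrite -(eqn_add2l n) h mul2n -addnn.
Qed.

Definition cc (h h' : bool) : R := if h && h' then 2 else 1.

Lemma coord_bound h h' s s' :
  `|\sum_(b : bool) fq h s b * fq h' s' b| <= cc h h'.
Proof.
rewrite big_bool /fq /cc.
by case: h; case: h'; case: s; case: s'; rewrite /= ?expr0 ?expr1 ler_norml;
  apply/andP; split; lra.
Qed.

Lemma G_bound m (Z Z' : {set 'I_m}) s s' :
  `|\sum_(a : bits m) Fm Z s a * Fm Z' s' a| <= \prod_(i < m) cc (i \notin Z) (i \notin Z').
Proof.
have -> : \sum_(a : bits m) Fm Z s a * Fm Z' s' a =
    \prod_(i < m) \sum_(b : bool) fq (i \notin Z) (s i) b * fq (i \notin Z') (s' i) b.
  rewrite bigA_distr_bigA /=; apply: eq_bigr => a _.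
  by rewrite /Fm -big_split.
rewrite normr_prod; apply: ler_prod => i _.
by rewrite normr_ge0 coord_bound.
Qed.

Lemma card_notin (n : nat) (Z : {set 'I_(2 * n)}) : #|Z| = n ->
  #|(fun i : 'I_(2 * n) => i \notin Z)| = n.
Proof.
move=> hZ.
have e : #|(fun i : 'I_(2 * n) => i \notin Z)| = #|[predC mem Z]|
  by apply: eq_card => i; rewrite !inE.
have := cardC (mem Z); rewrite card_ord hZ => h.
by rewrite e; apply/eqP; rewrite -(eqn_add2l n) h mul2n -addnn.
Qed.

Lemma prod_if (m : nat) (Z : {set 'I_m}) (x y : R) :
  \prod_(i < m) (if i \in Z then x else y) = x ^+ #|Z| * y ^+ #|(fun i : 'I_m => i \notin Z)|.
Proof.
rewrite (bigID (fun i => i \in Z)) /=.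
rewrite (eq_bigr (fun _ => x)); last by move=> i ->.
rewrite [X in _ * X](eq_bigr (fun _ => y)); last by move=> i /negbTE ->.
rewrite !prodr_const; congr (_ ^+ _ * _ ^+ _).
Qed.

Lemma row_sum (n : nat) (Z : {set 'I_(2 * n)}) : #|Z| = n ->
  (1 / 2) ^+ n * \sum_(Z' : {set 'I_(2 * n)} | #|Z'| == n)
     \prod_(i < 2 * n) cc (i \notin Z) (i \notin Z') <= (35 / 12) ^+ n.
Proof.
move=> hZ.
pose phi (Z' : {set 'I_(2 * n)}) := \prod_(i < 2 * n)
   (if i \in Z' then 4 / 3 * cc (i \notin Z) false else cc (i \notin Z) true).
have step : forall Z' : {set 'I_(2 * n)}, #|Z'| = n ->
   \prod_(i < 2 * n) cc (i \notin Z) (i \notin Z') = (3 / 4) ^+ n * phi Z'.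
  move=> Z' hZ'.
  have -> : phi Z' = \prod_(i < 2 * n) (if i \in Z' then 4 / 3 else 1) *
      \prod_(i < 2 * n) cc (i \notin Z) (i \notin Z').
    rewrite -big_split /=; apply: eq_bigr => i _.
    by case: (i \in Z'); rewrite /= ?mul1r.
  rewrite prod_if hZ' expr1n mulr1 mulrA -exprMn.
  have -> : (3 / 4 * (4 / 3) : R) = 1 by lra.
  by rewrite expr1n mul1r.
have phi0 : forall Z', 0 <= phi Z'.
  move=> Z'; apply: prodr_ge0 => i _; rewrite /cc.
  by case: (i \in Z'); case: (i \notin Z); rewrite /=; lra.
rewrite (eq_bigr (fun Z' => (3 / 4) ^+ n * phi Z')); last by move=> Z' /eqP; exact: step.
rewrite -mulr_sumr.
apply: (@le_trans _ _ ((1 / 2) ^+ n * ((3 / 4) ^+ n * \sum_(Z' : {set 'I_(2 * n)}) phi Z'))).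
  have h12 : 0 <= (1 / 2 : R) ^+ n by rewrite exprn_ge0 //; lra.
  have h34 : 0 <= (3 / 4 : R) ^+ n by rewrite exprn_ge0 //; lra.
  rewrite ler_wpM2l // ler_wpM2l //.
  rewrite [X in _ <= X](bigID (fun Z' : {set 'I_(2 * n)} => #|Z'| == n)) /=.
  by rewrite lerDl sumr_ge0.
rewrite /phi -bigA_distr /=.
rewrite (eq_bigr (fun i => if i \notin Z then 10 / 3 else 7 / 3)); last first.
  by move=> i _; rewrite /cc; case: (i \notin Z); rewrite /=; lra.
have -> : \prod_(i < 2 * n) (if i \notin Z then 10 / 3 else 7 / 3 : R) =
   \prod_(i < 2 * n) (if i \in Z then 7 / 3 else 10 / 3).
  by apply: eq_bigr => i _; case: (i \in Z).
rewrite prod_if hZ card_notin // mulrA -!exprMn.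
rewrite le_eqVlt; apply/orP; left; apply/eqP; congr (_ ^+ _); lra.
Qed.

Definition mix m (Z : {set 'I_m}) (t t' : bits m) : bits m :=
  [ffun i => if i \in Z then t i else t' i].

Lemma sumR_delta (K : finType) (f : K -> R) a :
  \sum_b (a == b)%:R * f b = f a.
Proof.
rewrite (bigD1 a) //= eqxx mul1r big1 ?addr0 // => b.
by rewrite eq_sym => /negbTE ->; rewrite mul0r.
Qed.

Lemma kernel_psd (n : nat) (t t' : bits (2 * n)) :
  psdC (fun a b : bits (2 * n) => ((35 / 12 : R) ^+ n)%:C * (a == b)%:R -
     \sum_(Z : {set 'I_(2 * n)} | #|Z| == n) meas_proj R Z (mix Z t t') a b).
Proof.
set mu := (35 / 12 : R) ^+ n.
set om := (1 / 2 : R) ^+ n.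
pose F (Z : {set 'I_(2 * n)}) := Fm Z (mix Z t t').
pose r (a b : bits (2 * n)) := mu * (a == b)%:R -
   \sum_(Z : {set 'I_(2 * n)} | #|Z| == n) om * F Z a * F Z b.
apply: (@psd_ext _ _ (fun a b => (r a b)%:C)); last first.
  move=> a b; rewrite /r rmorphB rmorphM rmorph_nat rmorph_sum /=; congr (_ - _).
  by apply: eq_bigr => Z /eqP hZ; rewrite meas_projE.
apply: lift.
  move=> a b; rewrite /r eq_sym; congr (_ - _); apply: eq_bigr => Z _; ring.
move=> x.
have -> : \sum_a \sum_b r a b * (x a * x b) =
    mu * \sum_a x a ^+ 2 -
    \sum_(Z : {set 'I_(2 * n)} | #|Z| == n) om * (\sum_a F Z a * x a) ^+ 2.
  rewrite /r.
  under eq_bigr => a _ do under eq_bigr => b _ do rewrite mulrBl.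
  under eq_bigr => a _ do rewrite sumrB.
  rewrite sumrB; congr (_ - _).
    rewrite mulr_sumr; apply: eq_bigr => a _.
    under eq_bigr => b _ do rewrite -mulrA mulrCA.
    by rewrite sumR_delta expr2.
  under eq_bigr => a _ do under eq_bigr => b _ do rewrite mulr_suml.
  under eq_bigr => a _ do rewrite exchange_big /=.
  rewrite exchange_big /=; apply: eq_bigr => Z _.
  rewrite expr2 mulr_suml mulr_sumr; apply: eq_bigr => a _.
  rewrite !mulr_sumr; apply: eq_bigr => b _; ring.
rewrite subr_ge0.
have om0 : 0 < om by rewrite /om exprn_gt0 //; lra.
have mu0 : 0 < mu by rewrite /mu exprn_gt0 //; lra.
apply: (@schur R _ _ (fun Z : {set _} => #|Z| == n) F om mu om0 mu0).
move=> Z /eqP hZ.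
apply: le_trans (row_sum hZ).
apply: ler_wpM2l; first exact: ltW.
apply: ler_sum => Z' _; exact: G_bound.
Qed.
End Quant.

Section Main.
Variable R : realType.
Local Notation C := (R[i]).
Local Notation "x %:C" := (real_complex R x) : ring_scope.

Lemma tr_lin (K1 K2 K3 : finType) (sg : op R (K1 * K2 * K3)%type) (c : C)
  (X P : op R K1) (Y : op R K2) (W : op R K3) :
  trace_mul sg (tens3 (fun a b => c * X a b - P a b) Y W) =
  c * trace_mul sg (tens3 X Y W) - trace_mul sg (tens3 P Y W).
Proof.
rewrite /trace_mul /tens3 mulr_sumr -sumrB; apply: eq_bigr => x _.
rewrite mulr_sumr -sumrB; apply: eq_bigr => y _; ring.
Qed.

Lemma tr_sum (K1 K2 K3 : finType) (sg : op R (K1 * K2 * K3)%type)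
  (I : finType) (Q : pred I) (X : I -> op R K1) (Y : op R K2) (W : op R K3) :
  trace_mul sg (tens3 (fun a b => \sum_(i | Q i) X i a b) Y W) =
  \sum_(i | Q i) trace_mul sg (tens3 (X i) Y W).
Proof.
rewrite /trace_mul /tens3.
under eq_bigr => x _ do under eq_bigr => y _ do rewrite !mulr_suml mulr_sumr.
under eq_bigr => x _ do rewrite exchange_big /=.
by rewrite exchange_big.
Qed.

Lemma tr_id (K1 K2 K3 : finType) (sg : op R (K1 * K2 * K3)%type)
  (M : K1 -> op R K2) (N : K1 -> op R K3) :
  povm M -> povm N ->
  \sum_t \sum_t' trace_mul sg (tens3 (fun a b => (a == b)%:R) (M t) (N t')) =
  \sum_x sg x x.
Proof.
move=> [_ PM] [_ PN].
rewrite /trace_mul /tens3.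
have key : forall x y : (K1 * K2 * K3)%type,
    \sum_t \sum_t' (y.1.1 == x.1.1)%:R * M t y.1.2 x.1.2 * N t' y.2 x.2 = (y == x)%:R :> C.
  move=> x y.
  under eq_bigr => t _ do rewrite -mulr_sumr.
  rewrite -mulr_suml -mulr_sumr PM PN.
  case: x => [[a b] c]; case: y => [[a' b'] c'] /=.
  by rewrite !xpair_eqE -!natrM !mulnb.
symmetry.
transitivity (\sum_x \sum_y sg x y * (y == x)%:R).
  apply: eq_bigr => x _; rewrite (bigD1 x) //= eqxx mulr1 big1 ?addr0 // => y.
  by move=> /negbTE ->; rewrite mulr0.
under eq_bigr => x _ do under eq_bigr => y _ do rewrite -key mulr_sumr.
under eq_bigr => x _ do under eq_bigr => y _ do under eq_bigr => t _ do rewrite mulr_sumr.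
under eq_bigr => x _ do under eq_bigr => y _ do rewrite pair_bigA /=.
rewrite [RHS]pair_bigA /=.
under eq_bigr => x _ do rewrite exchange_big /=.
rewrite exchange_big /=.
by apply: eq_bigr => p _; apply: eq_bigr => x _; apply: eq_bigr => y _; rewrite mulrA.
Qed.

Lemma cond_mix m (Z : {set 'I_m}) (t t' s : bits m) :
  ([forall i, (i \in Z) ==> (t i == s i)] && [forall i, (i \notin Z) ==> (t' i == s i)])
  = (s == mix Z t t').
Proof.
apply/idP/eqP.
  move=> /andP [/forallP h1 /forallP h2]; apply/ffunP => i; rewrite ffunE.
  case: (boolP (i \in Z)) => hi.
    by have := h1 i; rewrite hi /= => /eqP ->.
  by have := h2 i; rewrite hi /= => /eqP ->.
move=> ->; apply/andP; split; apply/forallP => i; apply/implyP => hi; rewrite ffunE.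
  by rewrite hi.
by rewrite (negbTE hi).
Qed.

Lemma Re_sum (I : finType) (Q : pred I) (f : I -> C) :
  complex.Re (\sum_(i | Q i) f i) = \sum_(i | Q i) complex.Re (f i).
Proof.
apply: (big_morph (@complex.Re R)) => // x y.
by case: x => a b; case: y => c d.
Qed.

Theorem lemma2_main (n : nat) (B B' : finType)
  (sigma : op R (bits (2 * n) * B * B')%type)
  (M : bits (2 * n) -> op R B) (N : bits (2 * n) -> op R B') :
  (1 <= n)%N ->
  density sigma -> povm M -> povm N ->
  forall delta : R, 0 < delta < 1 / 2 ->
    alpha sigma M N <=
      powR 2 (1 - n%:R * (1 - h2 delta)) + 2 * expR (- (1 / 2) * n%:R * delta ^+ 2).
Proof.
move=> n1 dens PM PN delta hd.
set mu := (35 / 12 : R) ^+ n.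
pose T := \sum_t \sum_t' \sum_(Z : {set 'I_(2 * n)} | #|Z| == n)
   trace_mul sigma (tens3 (meas_proj R Z (mix Z t t')) (M t) (N t')).
have hT : 0 <= (mu%:C : C) - T.
  have h0 : 0 <= \sum_t \sum_t' trace_mul sigma (tens3
      (fun a b : bits (2 * n) => ((35 / 12 : R) ^+ n)%:C * (a == b)%:R -
     \sum_(Z : {set 'I_(2 * n)} | #|Z| == n) meas_proj R Z (mix Z t t') a b) (M t) (N t')).
    apply: sumr_ge0 => t _; apply: sumr_ge0 => t' _.
    apply: (tr_ge0 dens.1).
    exact: (psd_tens (psd_tens (kernel_psd t t') (PM.1 t)) (PN.1 t')).
  have E : forall t t', trace_mul sigma (tens3
      (fun a b : bits (2 * n) => ((35 / 12 : R) ^+ n)%:C * (a == b)%:R -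
     \sum_(Z : {set 'I_(2 * n)} | #|Z| == n) meas_proj R Z (mix Z t t') a b) (M t) (N t'))
     = (mu%:C : C) * trace_mul sigma (tens3 (fun a b => (a == b)%:R) (M t) (N t')) -
       \sum_(Z : {set 'I_(2 * n)} | #|Z| == n)
         trace_mul sigma (tens3 (meas_proj R Z (mix Z t t')) (M t) (N t')).
    move=> t t'.
    have := tr_lin sigma (mu%:C) (fun a b : bits (2 * n) => (a == b)%:R)
      (fun a b => \sum_(Z : {set 'I_(2 * n)} | #|Z| == n) meas_proj R Z (mix Z t t') a b)
      (M t) (N t').
    by rewrite tr_sum.
  move: h0.
  under eq_bigr => t _ do under eq_bigr => t' _ do rewrite E.
  under eq_bigr => t _ do rewrite sumrB -mulr_sumr.
  by rewrite sumrB -mulr_sumr tr_id // dens.2 mulr1.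
have ReT : complex.Re T <= mu.
  move: hT; rewrite subr_ge0 lecE => /andP [_]; done.
have eA : alpha sigma M N = (('C(2 * n, n))%:R)^-1 * complex.Re T.
  rewrite /alpha; congr (_ * _).
  rewrite /T Re_sum; under [RHS]eq_bigr => t _ do rewrite Re_sum.
  under [RHS]eq_bigr => t _ do under eq_bigr => t' _ do rewrite Re_sum.
  under [RHS]eq_bigr => t _ do rewrite exchange_big /=.
  rewrite [RHS]exchange_big /=; apply: eq_bigr => Z _.
  rewrite exchange_big /=; apply: eq_bigr => t _.
  rewrite exchange_big /=; apply: eq_bigr => t' _.
  rewrite (eq_bigr (fun s => if s == mix Z t t' then
     complex.Re (trace_mul sigma (tens3 (meas_proj R Z s) (M t) (N t'))) else 0)); last first.
    by move=> s _; rewrite cond_mix.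
  by rewrite -big_mkcond big_pred1_eq.
rewrite eA.
apply: le_trans (@final_num R n delta n1 hd).
rewrite ler_wpM2l // invr_ge0 ler0n //.
Qed.
End Main.

Unset Implicit Arguments.

Theorem lemma2 (R : realType) (n : nat) (B B' : finType)
  (sigma : op R (bits (2 * n) * B * B')%type)
  (M : bits (2 * n) -> op R B) (N : bits (2 * n) -> op R B') :
  (1 <= n)%N ->
  density sigma -> povm M -> povm N ->
  forall delta : R, 0 < delta < 1 / 2 ->
    alpha sigma M N <=
      powR 2 (1 - n%:R * (1 - h2 delta)) + 2 * expR (- (1 / 2) * n%:R * delta ^+ 2).
Proof. exact: (@lemma2_main R n B B' sigma M N). Qed.
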